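(* Let $H=\langle a,b\mid a^2=ba^2b\rangle$. Then $H$ is reduced and atomic with $\mathcal A(H)=\{a,b\}$, and $\rho_k(H)=\infty$ for all $k\ge 2$.
   Context: $H$ is the monoid presented by generators $a,b$ and the single relation $a^2=ba^2b$. $\mathcal A(H)$ is its set of atoms (irreducible non-units). For $c\in H$, $\mathsf L(c)$ is the set of all $k$ such that $c$ is a product of $k$ atoms; $\mathcal U_k(H)$ is the union of all $\mathsf L(c)$ containing $k$, and $\rho_k(H)=\sup\mathcal U_k(H)$. *)

(* Defs.v *)
(* The monoid H = < a, b | a^2 = b a^2 b > is modelled as
   words over the alphabet {a,b} (letters: false = a, true = b) modulo the
   congruence generated by the defining relation.  All notions (units,
   atoms, lengths sets, unions of sets of lengths) are stated on words and
   are invariant under the congruence, so they are notions about H. *)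
From Stdlib Require Import List Relations.
Import ListNotations.

Definition letter := bool.
Definition ga : letter := false.
Definition gb : letter := true.
Definition word := list letter.

Inductive step : word -> word -> Prop :=
| step_rel : forall u v : word,
    step (u ++ [ga; ga] ++ v) (u ++ [gb; ga; ga; gb] ++ v).

Definition cong : word -> word -> Prop := clos_refl_sym_trans word step.

Definition is_unit (w : word) : Prop :=
  exists v : word, cong (w ++ v) [] /\ cong (v ++ w) [].

Definition reduced : Prop := forall w : word, is_unit w -> cong w [].

Definition atom (w : word) : Prop :=
  ~ is_unit w /\
  forall u v : word, cong w (u ++ v) -> is_unit u \/ is_unit v.

Definition atomic : Prop :=
  forall w : word, ~ is_unit w ->
    exists ws : list word, ws <> [] /\ Forall atom ws /\ cong w (concat ws).

Definition Lset (c : word) (k : nat) : Prop :=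
  exists ws : list word, length ws = k /\ Forall atom ws /\ cong c (concat ws).

(* m \in U_k(H) : the union of all L(c) with k \in L(c) *)
Definition Uset (k m : nat) : Prop := exists c : word, Lset c k /\ Lset c m.

(* rho_k(H) = sup U_k(H) = infinity, i.e. U_k(H) is unbounded in N *)
Definition rho_infinite (k : nat) : Prop :=
  forall N : nat, exists m : nat, N < m /\ Uset k m.

(* Main.v *)
Require Import Defs.
From Stdlib Require Import List Relations Lia.
Import ListNotations.

Lemma inv_cong (P : word -> Prop) :
  (forall x y, step x y -> (P x <-> P y)) -> forall x y, cong x y -> (P x <-> P y).
Proof.
  intros H x y C. induction C.
  - apply H; assumption.
  - tauto.
  - tauto.
  - tauto.
Qed.

Lemma step_len x y : step x y -> 2 <= length x /\ 2 <= length y.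
Proof. intros S. inversion S. rewrite !length_app. simpl. lia. Qed.

Lemma cong_small w0 x : length w0 <= 1 -> cong x w0 -> x = w0.
Proof.
  intros L C. apply (inv_cong (fun z => z = w0)) with (x := x) (y := w0); auto.
  intros p q S. apply step_len in S. split; intros; subst; lia.
Qed.

Lemma unit_nil w : is_unit w -> w = [].
Proof.
  intros [v [C _]]. apply cong_small in C; [|simpl; auto].
  apply app_eq_nil in C. tauto.
Qed.

Lemma is_unit_nil : is_unit [].
Proof. exists []. split; apply rst_refl. Qed.

Lemma atom_single x : atom [x].
Proof.
  split.
  - intros U. apply unit_nil in U. discriminate.
  - intros u v C. apply rst_sym in C. apply cong_small in C; [|simpl; auto].
    destruct u as [|? u]. left; apply is_unit_nil.
    right. simpl in C. inversion C. subst. apply app_eq_nil in H1 as [_ ->].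
    apply is_unit_nil.
Qed.

Lemma concat_single (w : word) : concat (map (fun x => [x]) w) = w.
Proof. induction w; simpl; congruence. Qed.

Lemma Lset_of c w : cong c w -> Lset c (length w).
Proof.
  intros C. exists (map (fun x => [x]) w). split.
  - apply length_map.
  - split. apply Forall_forall. intros z Hz. apply in_map_iff in Hz as [x [<- _]].
    apply atom_single. rewrite concat_single. auto.
Qed.

Lemma pump n t : cong ([ga;ga] ++ t) (repeat gb n ++ [ga;ga] ++ repeat gb n ++ t).
Proof.
  induction n.
  - apply rst_refl.
  - eapply rst_trans. apply IHn.
    apply rst_step.
    replace (repeat gb (S n) ++ [ga; ga] ++ repeat gb (S n) ++ t)
      with (repeat gb n ++ [gb;ga;ga;gb] ++ (repeat gb n ++ t)).
    apply step_rel.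
    replace (repeat gb (S n)) with (repeat gb n ++ [gb]) at 1.
    simpl. rewrite <- app_assoc. reflexivity.
    rewrite <- repeat_cons. reflexivity.
Qed.

Theorem mainTheorem6 :
  reduced /\ atomic /\
  (forall w : word, atom w <-> (cong w [ga] \/ cong w [gb])) /\
  (forall k : nat, 2 <= k -> rho_infinite k).
Proof.
  split; [|split; [|split]].
  - intros w U. apply unit_nil in U. subst. apply rst_refl.
  - intros w U. exists (map (fun x => [x]) w). split; [|split].
    + destruct w. exfalso; apply U, is_unit_nil. discriminate.
    + apply Forall_forall. intros z Hz. apply in_map_iff in Hz as [x [<- _]].
      apply atom_single.
    + rewrite concat_single. apply rst_refl.
  - intros w. split.
    + intros [NU A]. destruct w as [|x [|y r]].
      * exfalso; apply NU, is_unit_nil.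
      * destruct x; [right|left]; apply rst_refl.
      * destruct (A [x] (y :: r) (rst_refl _ _ _)) as [U|U];
          apply unit_nil in U; discriminate.
    + intros [C|C]; apply cong_small in C; simpl; auto; subst; apply atom_single.
  - intros k Hk N. exists (k + 2 * (S N)). split. lia.
    destruct k as [|[|k]]; [lia|lia|].
    exists (repeat ga (S (S k))). split.
    + rewrite <- (repeat_length ga (S (S k))) at 2. apply Lset_of, rst_refl.
    + pose proof (Lset_of _ _ (pump (S N) (repeat ga k))) as L.
      rewrite !length_app, !repeat_length in L. simpl in L.
      replace (S (S k) + 2 * S N) with (S (N + S (S (S (N + k))))) by lia.
      exact L.
Qed.
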